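(* Let $P,Q,R$ be plane posets. (1) $P\triangleleft Q\leq R$ if and only if there exists a biideal $I_0$ of $R$ such that $P\leq R\setminus I_0$ and $Q\leq I_0$. Moreover, if this holds, $I_0$ is unique and $I_0=\theta_{PQ,R}(Q)$. (2) $PQ\leq R$ if and only if there exists a plane subposet $I_0$ of $R$ such that $R=(R\setminus I_0)I_0$, $P\leq R\setminus I_0$ and $Q\leq I_0$. Moreover, if this holds, $I_0$ is unique and $I_0=\theta_{P\triangleleft Q,R}(Q)$. (3) $\iota(PQ)\leq R$ if and only if there exists a biideal $I_0$ of $R$ such that $\iota(R\setminus I_0)\leq P$ and $\iota(I_0)\leq Q$. Moreover, if this holds, $I_0$ is unique and $I_0=\theta_{PQ,R}(Q)$. (4) $\iota(P\triangleleft Q)\leq R$ if and only if there exists a plane subposet $I_0$ of $R$ such that $R=(R\setminus I_0)I_0$, $\iota(R\setminus I_0)\leq P$ and $\iota(I_0)\leq Q$. Moreover, if this holds, $I_0$ is unique and $I_0=\theta_{P\triangleleft Q,R}(Q)$.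
   Context: A plane poset is a finite set with two partial orders $\leq_h,\leq_r$ such that two distinct elements are $\leq_h$-comparable iff they are not $\leq_r$-comparable, considered up to isomorphism; a subset with the restricted orders is a plane subposet. On a plane poset, $x\leq y$ iff ($x\leq_h y$ or $x\leq_r y$) is a total order (known fact). For plane posets $P,Q$ of the same cardinality, $\theta_{P,Q}$ is the increasing bijection $P\to Q$ for these total orders, and $P\leq Q$ means: for all $x,y\in P$, $\theta_{P,Q}(x)\leq_h\theta_{P,Q}(y)$ in $Q$ implies $x\leq_h y$ in $P$ (the relation $\leq$ is only defined between plane posets of the same cardinality). A biideal of $P$ is a subset $I$ such that $x\in I$ and ($x\leq_h y$ or $x\leq_r y$) imply $y\in I$. $PQ$ is the plane poset on $P\sqcup Q$ in which $P,Q$ are plane subposets, no element of $P$ is $\leq_h$-comparable to an element of $Q$, and $x<_r y$ for all $x\in P,y\in Q$; $P\triangleleft Q$ is defined likewise with $x<_h y$ for all $x\in P,y\in Q$ and no $\leq_r$-comparabilities between $P$ and $Q$. For a plane subposet $I_0$ of $R$, $R=(R\setminus I_0)I_0$ means $R$ equals the product $PQ$-type construction of its plane subposets $R\setminus I_0$ and $I_0$. $\iota(P)=(P,\leq_r,\leq_h)$ exchanges the two orders. *)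

(* Defs.v *)
From mathcomp Require Import all_boot.
Set Implicit Arguments. Unset Strict Implicit. Unset Printing Implicit Defensive.

(* A (raw) bi-relational finite structure: carrier with two relations
   <=_h (ph) and <=_r (pr).  Plane-poset axioms are a separate predicate. *)
Record pp := PP { car :> finType; ph : rel car; pr : rel car }.
Arguments ph p _ _ : clear implicits.
Arguments pr p _ _ : clear implicits.

Definition is_porder (T : finType) (e : rel T) : Prop :=
  reflexive e /\ antisymmetric e /\ transitive e.

Definition is_plane (P : pp) : Prop :=
  is_porder (ph P) /\ is_porder (pr P) /\
  forall x y : P, x != y ->
    (ph P x y || ph P y x) = ~~ (pr P x y || pr P y x).

Definition pple (P : pp) (x y : P) : bool := ph P x y || pr P x y.

Definition rank (P : pp) (x : P) : nat :=
  #|[pred y : P | pple y x && (y != x)]|.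

(* theta_{P,Q}: the increasing bijection P -> Q (rank-preserving map);
   option-valued since it is only meaningful when #|P| = #|Q|. *)
Definition theta (P Q : pp) (x : P) : option Q :=
  [pick y : Q | rank y == rank x].

Definition ppleq (P Q : pp) : Prop :=
  #|P| = #|Q| /\
  forall (x y : P) (x' y' : Q), theta Q x = Some x' -> theta Q y = Some y' ->
    ph Q x' y' -> ph P x y.

Definition biideal (R : pp) (I : {set R}) : Prop :=
  forall x y : R, x \in I -> (ph R x y || pr R x y) -> y \in I.

Definition sub (R : pp) (A : {set R}) : pp :=
  @PP {x : R | x \in A} (fun x y => ph R (val x) (val y))
                        (fun x y => pr R (val x) (val y)).

Definition pprod (P Q : pp) : pp :=
  @PP (P + Q)%type
    (fun a b => match a, b with
                | inl x, inl y => ph P x y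
                | inr x, inr y => ph Q x y
                | _, _ => false end)
    (fun a b => match a, b with
                | inl x, inl y => pr P x y
                | inr x, inr y => pr Q x y
                | inl _, inr _ => true
                | inr _, inl _ => false end).

Definition ptri (P Q : pp) : pp :=
  @PP (P + Q)%type
    (fun a b => match a, b with
                | inl x, inl y => ph P x y
                | inr x, inr y => ph Q x y
                | inl _, inr _ => true
                | inr _, inl _ => false end)
    (fun a b => match a, b with
                | inl x, inl y => pr P x y
                | inr x, inr y => pr Q x y
                | _, _ => false end).

Definition iota_pp (P : pp) : pp := @PP P (pr P) (ph P).

(* R = (R \ I) I : R is literally the product structure of its plane
   subposets R\I and I (relations inside each part are those of R already) *)
Definition is_prod_split (R : pp) (I : {set R}) : Prop :=
  forall x y : R, x \notin I -> y \in I ->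
    [&& pr R x y, x != y, ~~ pr R y x, ~~ ph R x y & ~~ ph R y x].

Definition theta_img_prod (P Q R : pp) : {set R} :=
  [set y : R | [exists q : Q, @theta (pprod P Q) R (inr q) == Some y]].
Definition theta_img_tri (P Q R : pp) : {set R} :=
  [set y : R | [exists q : Q, @theta (ptri P Q) R (inr q) == Some y]].

(* Main.v *)
Require Import Defs.
From mathcomp Require Import all_boot.
Set Implicit Arguments. Unset Strict Implicit. Unset Printing Implicit Defensive.

Section Base.
Variable P : pp.
Hypothesis HP : is_plane P.

Lemma excl (x y : P) : (ph P x y || ph P y x) -> (pr P x y || pr P y x) -> x = y.
Proof.
case: HP => _ [_ pl] h1 h2; case: (eqVneq x y) => // /pl; by rewrite h1 h2.
Qed.

Lemma pple_refl (x : P) : pple x x.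
Proof. case: HP => [[hr _] _]; by rewrite /pple hr. Qed.

Lemma pple_total (x y : P) : pple x y || pple y x.
Proof.
case: (eqVneq x y) => [->|nxy]; first by rewrite pple_refl.
case: HP => _ [_ pl]; move: (pl x y nxy); rewrite /pple.
by case: (ph P x y); case: (ph P y x); case: (pr P x y); case: (pr P y x).
Qed.

Lemma pple_anti (x y : P) : pple x y -> pple y x -> x = y.
Proof.
case: HP => [[_ [ha _]] [[_ [ra _]] _]].
rewrite /pple => /orP[h1|h1] /orP[h2|h2].
- by apply: ha; rewrite h1 h2.
- by apply: excl; rewrite ?h1 ?h2 ?orbT.
- by apply: excl; rewrite ?h1 ?h2 ?orbT.
- by apply: ra; rewrite h1 h2.
Qed.

Lemma pple_trans (x y z : P) : pple x y -> pple y z -> pple x z.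
Proof.
case: HP => [[_ [_ ht]] [[_ [_ rt]] _]].
rewrite {1 2}/pple => /orP[h1|h1] /orP[h2|h2].
- by rewrite /pple (ht _ _ _ h1 h2).
- case/orP: (pple_total x z) => // /orP[h3|h3].
  + have e : y = z by apply: excl; rewrite ?(ht _ _ _ h3 h1) ?h2 ?orbT.
    by rewrite -e /pple h1.
  + have e : x = y by apply: excl; rewrite ?(rt _ _ _ h2 h3) ?h1 ?orbT.
    by rewrite e /pple h2 orbT.
- case/orP: (pple_total x z) => // /orP[h3|h3].
  + have e : x = y by apply: excl; rewrite ?(ht _ _ _ h2 h3) ?h1 ?orbT.
    by rewrite e /pple h2.
  + have e : y = z by apply: excl; rewrite ?(rt _ _ _ h3 h1) ?h2 ?orbT.
    by rewrite -e /pple h1 orbT.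
- by rewrite /pple (rt _ _ _ h1 h2) orbT.
Qed.

Lemma rank_mono (x y : P) : pple x y -> rank x <= rank y.
Proof.
move=> hxy; apply: subset_leq_card; apply/subsetP => w; rewrite !inE.
case/andP=> hw nw; rewrite (pple_trans hw hxy) /=.
apply/eqP => ewy; move: hw; rewrite ewy => hyx.
by move: nw; rewrite ewy (pple_anti hxy hyx) eqxx.
Qed.

Lemma rank_strict (x y : P) : pple x y -> x != y -> rank x < rank y.
Proof.
move=> hxy nxy; apply: proper_card; apply/properP; split.
  apply/subsetP => w; rewrite !inE.
  case/andP=> hw nw; rewrite (pple_trans hw hxy) /=.
  apply/eqP => ewy; move: hw; rewrite ewy => hyx.
  by move: nw; rewrite ewy (pple_anti hxy hyx) eqxx.
by exists x; rewrite inE ?hxy ?nxy /= ?eqxx ?andbF.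
Qed.

Lemma pple_rank (x y : P) : pple x y = (rank x <= rank y).
Proof.
apply/idP/idP; first exact: rank_mono.
move=> h; case/orP: (pple_total x y) => // hyx.
case: (eqVneq y x) => [->|nyx]; first exact: pple_refl.
by move: (rank_strict hyx nyx); rewrite ltnNge h.
Qed.

Lemma rank_inj (x y : P) : rank x = rank y -> x = y.
Proof.
move=> e; apply: pple_anti; by rewrite pple_rank e.
Qed.

Lemma rank_lt_card (x : P) : rank x < #|P|.
Proof.
apply: proper_card; apply/properP; split; first exact/subsetP.
by exists x; rewrite ?inE ?eqxx ?andbF.
Qed.

Lemma rank_surj k : k < #|P| -> exists x : P, rank x = k.
Proof.
move=> hk.
pose f (x : P) : 'I_#|P| := Ordinal (rank_lt_card x).
have injf : injective f by move=> x y /(congr1 val) /= /rank_inj.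
have := inj_card_onto injf (eq_leq (card_ord _)) (Ordinal hk).
by case/codomP => x /(congr1 val) /= ->; exists x.
Qed.

Lemma card_rank_lt k : k <= #|P| -> #|[pred z : P | rank z < k]| = k.
Proof.
elim: k => [|k IH] hk.
  by apply: eq_card0 => z; rewrite inE ltn0.
have [x hx] := rank_surj hk.
rewrite (cardD1 x) inE hx ltnSn add1n; congr S.
rewrite -{2}(IH (ltnW hk)); apply: eq_card => z; rewrite !inE.
case: (eqVneq z x) => [->|nzx]; first by rewrite hx ltnn.
rewrite ltnS leq_eqVlt; case: (eqVneq (rank z) k) => //= e.
by move: nzx; rewrite -hx in e; rewrite (rank_inj e) eqxx.
Qed.
End Base.


Lemma plane_sub (R : pp) (A : {set R}) : is_plane R -> is_plane (sub A).
Proof.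
case=> [[hr [ha ht]] [[rr [ra rt]] pl]].
refine (conj (conj _ (conj _ _)) (conj (conj _ (conj _ _)) _)).
- by move=> x; apply: hr.
- by move=> x y /ha /val_inj.
- by move=> x y z; apply: ht.
- by move=> x; apply: rr.
- by move=> x y /ra /val_inj.
- by move=> x y z; apply: rt.
- by move=> x y nxy; apply: pl.
Qed.

Lemma plane_iota (R : pp) : is_plane R -> is_plane (iota_pp R).
Proof.
case=> [h [r pl]]; split; [exact: r|split; [exact: h|]].
move=> x y /pl /=; by case: (ph R x y); case: (ph R y x); case: (pr R x y); case: (pr R y x).
Qed.

Lemma rank_iota (R : pp) (x : R) : rank (x : iota_pp R) = rank x.
Proof. by apply: eq_card => y; rewrite !inE /pple /= orbC. Qed.

Lemma card_sub_pred (T : finType) (A : {set T}) (p : pred T) :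
  #|[pred w : {x : T | x \in A} | p (val w)]| = #|[pred x | (x \in A) && p x]|.
Proof.
rewrite -(card_image val_inj); apply: eq_card => x; rewrite inE.
apply/imageP/andP => [[w hw ->]|[hA hp]]; first by split; [exact: valP|].
by exists (exist _ x hA).
Qed.

Lemma card_subpp (R : pp) (A : {set R}) : #|sub A| = #|A|.
Proof. by rewrite /= card_sig; apply: eq_card. Qed.

Lemma card_sum_pred (A B : finType) (p : pred (A + B)%type) :
  #|p| = #|[pred a | p (inl a)]| + #|[pred b | p (inr b)]|.
Proof.
have il : injective (@inl A B) by move=> x y [].
have ir : injective (@inr A B) by move=> x y [].
rewrite -(cardID [pred x : (A + B)%type | if x is inl _ then true else false]) -(card_image il) -(card_image ir).
congr (_ + _); apply: eq_card => x; rewrite !inE.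
  case: x => [a|b]; first by rewrite andbT (mem_image il) inE.
  by rewrite andbF; apply/esym/negP => /imageP[a _ []].
case: x => [a|b]; first by rewrite /=; apply/esym/negP => /imageP[b _ []].
by rewrite /= (mem_image ir) inE.
Qed.


Definition RF (P Q : pp) : Prop :=
  forall (x y : P) (x' y' : Q), rank x' = rank x -> rank y' = rank y ->
    ph Q x' y' -> ph P x y.

Lemma theta_rank (P Q : pp) (x : P) (y : Q) : theta Q x = Some y -> rank y = rank x.
Proof. by rewrite /theta; case: pickP => // z /eqP h [<-]. Qed.

Lemma theta_some (P Q : pp) (x : P) (y : Q) : is_plane Q ->
  rank y = rank x -> theta Q x = Some y.
Proof.
move=> HQ e; rewrite /theta; case: pickP => [z /eqP hz|/(_ y)]; last by rewrite e eqxx.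
by congr Some; apply: (rank_inj HQ); rewrite hz e.
Qed.

Lemma ppleqE (P Q : pp) : is_plane Q -> ppleq P Q <-> #|P| = #|Q| /\ RF P Q.
Proof.
move=> HQ; split=> [[hc h]|[hc h]]; split=> //.
  move=> x y x' y' ex ey; apply: h; exact: theta_some.
by move=> x y x' y' /theta_rank ex /theta_rank ey; apply: h.
Qed.

Lemma RF_swap (A B : pp) : is_plane A -> is_plane B ->
  RF (iota_pp A) B -> RF (iota_pp B) A.
Proof.
move=> HA HB h u v u' v' eu ev hA.
have eu1 : @rank B u = rank u' by rewrite eu rank_iota.
have ev1 : @rank B v = rank v' by rewrite ev rank_iota.
clear eu ev.
case: (eqVneq u v) => [<-|nuv]; first by case: HB => _ [[rr _] _]; apply: rr.
have nu'v' : u' != v'.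
  apply: contra nuv => /eqP e; apply/eqP; apply: (rank_inj HB).
  by rewrite [LHS]eu1 [RHS]ev1 e.
have plA := HA; case: plA => _ [_ plA].
have hnr : ~~ (pr A u' v' || pr A v' u').
  by rewrite -(plA u' v' nu'v') hA.
have le : rank u' <= rank v' by rewrite -(pple_rank HA) /pple hA.
have ltuv : @rank B u < @rank B v.
  by rewrite ltn_neqAle eu1 ev1 le andbT; apply: contra nu'v' => /eqP /(rank_inj HA) ->.
apply/negPn/negP => npr.
have hB : ph B u v.
  have : @pple B u v by rewrite (pple_rank HB) ltnW.
  by rewrite /pple; case/orP => // hr; move: npr; rewrite /= hr.
have := h u' v' u v; rewrite !rank_iota => /(_ eu1 ev1 hB) /= hr.
by move: hnr; rewrite hr.
Qed.

Definition sumlike (P Q : pp) (hX rX : rel (P + Q)%type) : Prop :=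
 [/\ forall a b, hX (inl a) (inl b) = ph P a b,
     forall a b, hX (inr a) (inr b) = ph Q a b,
     forall a b, hX (inl a) (inl b) || rX (inl a) (inl b) = pple a b,
     forall a b, hX (inr a) (inr b) || rX (inr a) (inr b) = pple a b
   & forall a b, (hX (inl a) (inr b) || rX (inl a) (inr b)) &&
                ~~ (hX (inr b) (inl a) || rX (inr b) (inl a))].

Lemma rank_inl (P Q : pp) hX rX (a : P) : @sumlike P Q hX rX ->
  rank (inl a : @PP (P + Q)%type hX rX) = rank a.
Proof.
case=> _ _ hl _ hc; rewrite /rank card_sum_pred.
rewrite [X in _ + X](_ : _ = 0) ?addn0.
  by apply: eq_card => b; rewrite !inE /pple /= hl.
apply: eq_card0 => b; rewrite !inE /pple /=.
by have /andP[_ /negbTE ->] := hc a b.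
Qed.

Lemma rank_inr (P Q : pp) hX rX (b : Q) : @sumlike P Q hX rX ->
  rank (inr b : @PP (P + Q)%type hX rX) = #|P| + rank b.
Proof.
case=> _ _ _ hr hc; rewrite /rank card_sum_pred; congr (_ + _).
  by apply: eq_card => a; rewrite !inE /pple /=; have /andP[-> _] := hc a b.
by apply: eq_card => c; rewrite !inE /pple /= hr.
Qed.


Definition cut (R : pp) (I : {set R}) :=
  forall w z : R, w \notin I -> z \in I -> pple w z && (w != z).

Lemma biideal_cut (R : pp) (I : {set R}) : is_plane R -> biideal I -> cut I.
Proof.
move=> HR hb w z hw hz; apply/andP; split.
  case/orP: (pple_total HR w z) => // hzw.
  by move: hw; rewrite (hb z w hz hzw).
by apply: contraNneq hw => ->.
Qed.

Lemma split_cut (R : pp) (I : {set R}) : is_prod_split I -> cut I.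
Proof.
move=> hs w z hw hz; have /and5P[h1 h2 _ _ _] := hs w z hw hz.
by rewrite /pple h1 orbT h2.
Qed.

Lemma rank_sub_out (R : pp) (I : {set R}) : is_plane R -> cut I ->
  forall z : sub (~: I), rank z = rank (val z).
Proof.
move=> HR hc z.
transitivity #|[pred w : {x : R | x \in ~: I} |
                (fun x => pple x (val z) && (x != val z)) (val w)]|.
  by apply: eq_card => w; rewrite !inE.
rewrite (card_sub_pred (~: I) (fun x => pple x (val z) && (x != val z))); apply: eq_card => x; rewrite !inE.
case: (boolP (x \in I)) => //= hx; apply/esym/negP => /andP[hxz nxz].
have hz : val z \notin I by have := valP z; rewrite inE.
have /andP[hzx nzx] := hc _ _ hz hx.
by move: nzx; rewrite (pple_anti HR hzx hxz) eqxx.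
Qed.

Lemma rank_sub_in (R : pp) (I : {set R}) : cut I ->
  forall z : sub I, rank (val z) = #|~: I| + rank z.
Proof.
move=> hc z; rewrite /rank -[LHS](cardID (mem (~: I))); congr (_ + _).
  apply: eq_card => x; rewrite !inE; case: (boolP (x \in I)) => hx; rewrite ?andbF ?andbT //.
  by apply: hc => //; exact: valP.
transitivity #|[pred w : {x : R | x \in I} |
                (fun x => pple x (val z) && (x != val z)) (val w)]|; last first.
  by apply: eq_card => w; rewrite !inE.
rewrite (card_sub_pred I (fun x => pple x (val z) && (x != val z))); apply: eq_card => x; rewrite !inE negbK andbC //.
Qed.

Lemma cut_rank (R : pp) (I : {set R}) : is_plane R -> cut I ->
  I = [set z | #|~: I| <= rank z].
Proof.
move=> HR hc; apply/setP => z; rewrite inE.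
case: (boolP (z \in I)) => hz.
  by rewrite -[z]/(val (exist (fun x => x \in I) z hz)) rank_sub_in // leq_addr.
have hz' : z \in ~: I by rewrite inE.
rewrite -[z]/(val (exist (fun x => x \in ~: I) z hz')) -rank_sub_out //.
apply/esym/negbTE; rewrite -ltnNge -(card_subpp (~: I)); apply: rank_lt_card; exact: plane_sub.
Qed.

Lemma rankset (R : pp) n : is_plane R -> n <= #|R| ->
  #|~: [set z : R | n <= rank z]| = n /\ biideal [set z : R | n <= rank z].
Proof.
move=> HR hn; split.
  rewrite -{2}(card_rank_lt HR hn); apply: eq_card => z; rewrite !inE ltnNge //.
move=> x y; rewrite !inE => hx hxy; apply: leq_trans hx _; exact: rank_mono.
Qed.


Lemma card_X (P Q : pp) hX rX : #|@PP (P + Q)%type hX rX| = #|P| + #|Q|.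
Proof. exact: card_sum. Qed.

Lemma fwd (P Q R : pp) hX rX : is_plane P -> is_plane Q -> is_plane R ->
  @sumlike P Q hX rX -> ppleq (@PP (P + Q)%type hX rX) R ->
  [/\ biideal [set z : R | #|P| <= rank z],
      ppleq P (sub (~: [set z : R | #|P| <= rank z])),
      ppleq Q (sub [set z : R | #|P| <= rank z]) &
      forall x y : R, x \notin [set z : R | #|P| <= rank z] ->
        y \in [set z : R | #|P| <= rank z] ->
        exists a b, (ph R x y -> hX (inl a) (inr b)) /\ (ph R y x -> hX (inr b) (inl a))].
Proof.
move=> HP HQ HR hs /(ppleqE _ HR) [hc hrf].
set I := [set z : R | #|P| <= rank z].
rewrite card_X in hc.
have hn : #|P| <= #|R| by rewrite -hc leq_addr.
have [hcI hb] := rankset HR hn.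
have hcut := biideal_cut HR hb.
have hs' := hs; case: hs' => hll hrr _ _ _.
split => //.
- apply/(ppleqE _ (plane_sub _ HR)); split; first by rewrite card_subpp hcI.
  move=> x y x' y' ex ey hph.
  rewrite -hll; apply: (hrf (inl x) (inl y) (val x') (val y')) => //.
    by rewrite rank_inl // -ex rank_sub_out.
  by rewrite rank_inl // -ey rank_sub_out.
- apply/(ppleqE _ (plane_sub _ HR)); split.
    by rewrite card_subpp; apply/eqP; rewrite -(eqn_add2r #|~: I|) cardsC hcI addnC hc.
  move=> x y x' y' ex ey hph.
  rewrite -hrr; apply: (hrf (inr x) (inr y) (val x') (val y')) => //.
    by rewrite rank_inr // -ex rank_sub_in // hcI.
  by rewrite rank_inr // -ey rank_sub_in // hcI.
- move=> x y; rewrite !inE -ltnNge => hx hy.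
  have [a ha] := rank_surj HP hx.
  have hy' : rank y - #|P| < #|Q|.
    by rewrite ltn_subLR // hc rank_lt_card.
  have [b hb'] := rank_surj HQ hy'.
  exists a, b; split => h.
    by apply: (hrf (inl a) (inr b) x y) => //; rewrite ?rank_inl ?rank_inr // hb' subnKC.
  by apply: (hrf (inr b) (inl a) y x) => //; rewrite ?rank_inl ?rank_inr // hb' subnKC.
Qed.

Lemma bwd (P Q R : pp) hX rX (I : {set R}) : is_plane R ->
  @sumlike P Q hX rX -> cut I -> ppleq P (sub (~: I)) -> ppleq Q (sub I) ->
  (forall a b (x y : R), x \notin I -> y \in I ->
     (ph R x y -> hX (inl a) (inr b)) /\ (ph R y x -> hX (inr b) (inl a))) ->
  ppleq (@PP (P + Q)%type hX rX) R.
Proof.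
move=> HR hs hcut /(ppleqE _ (plane_sub _ HR)) [cP rP]
  /(ppleqE _ (plane_sub _ HR)) [cQ rQ] hcr.
rewrite card_subpp in cP; rewrite card_subpp in cQ.
have hs' := hs; case: hs' => hll hrr _ _ _.
have eI := cut_rank HR hcut.
have inl_out (a : P) (x : R) : rank x = rank (inl a : @PP (P + Q)%type hX rX) -> x \notin I.
  rewrite rank_inl // => e; rewrite eI inE -ltnNge e -cP; exact: rank_lt_card.
have inr_in (b : Q) (x : R) : rank x = rank (inr b : @PP (P + Q)%type hX rX) -> x \in I.
  by rewrite rank_inr // => e; rewrite eI inE e -cP leq_addr.
apply/(ppleqE _ HR); split.
  by rewrite card_X cP cQ addnC cardsC.
case=> [a|b] [c|d] x y ex ey hxy.
- have hx : x \in ~: I by rewrite inE (inl_out _ _ ex).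
  have hy : y \in ~: I by rewrite inE (inl_out _ _ ey).
  rewrite /= hll; apply: (rP a c (exist _ x hx) (exist _ y hy)) => //.
    by rewrite rank_sub_out // ex rank_inl.
  by rewrite rank_sub_out // ey rank_inl.
- exact: (hcr a d x y (inl_out _ _ ex) (inr_in _ _ ey)).1.
- exact: (hcr c b y x (inl_out _ _ ey) (inr_in _ _ ex)).2.
- have hx := inr_in _ _ ex; have hy := inr_in _ _ ey.
  rewrite /= hrr; apply: (rQ b d (exist _ x hx) (exist _ y hy)) => //.
    by apply/eqP; rewrite -(eqn_add2l #|~: I|) -rank_sub_in //= ex rank_inr // cP.
  by apply/eqP; rewrite -(eqn_add2l #|~: I|) -rank_sub_in //= ey rank_inr // cP.
Qed.

Lemma uniq_theta (P Q R : pp) hX rX (I : {set R}) : is_plane R -> is_plane Q ->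
  @sumlike P Q hX rX -> #|R| = #|P| + #|Q| -> cut I -> #|~: I| = #|P| ->
  I = [set y : R | [exists q : Q, @theta (@PP (P + Q)%type hX rX) R (inr q) == Some y]].
Proof.
move=> HR HQ hs hc hcut cI.
rewrite {1}(cut_rank HR hcut) cI; apply/setP => y; rewrite !inE.
apply/idP/existsP => [h|[q /eqP /theta_rank]].
  have hy' : rank y - #|P| < #|Q|.
    by rewrite ltn_subLR // -hc rank_lt_card.
  have [b hb'] := rank_surj HQ hy'.
  by exists b; apply/eqP; apply: theta_some => //; rewrite rank_inr // hb' subnKC.
by rewrite rank_inr // => ->; rewrite leq_addr.
Qed.


Lemma swap_pp (A B : pp) : is_plane A -> is_plane B ->
  ppleq (iota_pp A) B -> ppleq (iota_pp B) A.
Proof.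
move=> HA HB /(ppleqE _ HB) [hc hr]; apply/(ppleqE _ HA); split.
  by rewrite /= hc.
exact: RF_swap.
Qed.

Lemma biideal_cross (R : pp) (I : {set R}) (x y : R) : biideal I ->
  x \notin I -> y \in I -> ~~ ph R y x.
Proof.
move=> hb hx hy; apply/negP => hyx.
by move: hx; rewrite (hb y x hy) // hyx.
Qed.

Lemma split_of (R : pp) (I : {set R}) : is_plane R -> cut I ->
  (forall x y, x \notin I -> y \in I -> ~~ ph R x y /\ ~~ ph R y x) -> is_prod_split I.
Proof.
move=> HR hc hn x y hx hy.
have [n1 n2] := hn x y hx hy.
have /andP[hxy nxy] := hc x y hx hy.
have hr : pr R x y by move: hxy; rewrite /pple (negbTE n1).
have nr : ~~ pr R y x.
  apply/negP => hyx; move: nxy; rewrite (pple_anti HR hxy) ?eqxx //.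
  by rewrite /pple hyx orbT.
by rewrite hr nxy nr n1 n2.
Qed.

Lemma split_cross (R : pp) (I : {set R}) (x y : R) : is_prod_split I ->
  x \notin I -> y \in I -> ~~ ph R x y /\ ~~ ph R y x.
Proof. by move=> hs hx hy; have /and5P[_ _ _ -> ->] := hs x y hx hy. Qed.

Theorem lemma22 (P Q R : pp) :
  is_plane P -> is_plane Q -> is_plane R ->
  (* (1) *)
  ((ppleq (ptri P Q) R <->
     exists I : {set R}, [/\ biideal I, ppleq P (sub (~: I)) & ppleq Q (sub I)])
   /\ (ppleq (ptri P Q) R -> forall I : {set R},
        [/\ biideal I, ppleq P (sub (~: I)) & ppleq Q (sub I)] ->
        I = theta_img_prod P Q R))
  /\
  (* (2) *)
  ((ppleq (pprod P Q) R <->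
     exists I : {set R}, [/\ is_prod_split I, ppleq P (sub (~: I)) & ppleq Q (sub I)])
   /\ (ppleq (pprod P Q) R -> forall I : {set R},
        [/\ is_prod_split I, ppleq P (sub (~: I)) & ppleq Q (sub I)] ->
        I = theta_img_tri P Q R))
  /\
  (* (3) *)
  ((ppleq (iota_pp (pprod P Q)) R <->
     exists I : {set R}, [/\ biideal I, ppleq (iota_pp (sub (~: I))) P
                                    & ppleq (iota_pp (sub I)) Q])
   /\ (ppleq (iota_pp (pprod P Q)) R -> forall I : {set R},
        [/\ biideal I, ppleq (iota_pp (sub (~: I))) P & ppleq (iota_pp (sub I)) Q] ->
        I = theta_img_prod P Q R))
  /\
  (* (4) *)
  ((ppleq (iota_pp (ptri P Q)) R <->
     exists I : {set R}, [/\ is_prod_split I, ppleq (iota_pp (sub (~: I))) P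
                                         & ppleq (iota_pp (sub I)) Q])
   /\ (ppleq (iota_pp (ptri P Q)) R -> forall I : {set R},
        [/\ is_prod_split I, ppleq (iota_pp (sub (~: I))) P & ppleq (iota_pp (sub I)) Q] ->
        I = theta_img_tri P Q R)).

Proof.
move=> HP HQ HR.
have sPQ : @sumlike P Q (ph (pprod P Q)) (pr (pprod P Q)) by [].
have sTQ : @sumlike P Q (ph (ptri P Q)) (pr (ptri P Q)) by [].
have sIP : @sumlike (iota_pp P) (iota_pp Q) (ph (iota_pp (pprod P Q))) (pr (iota_pp (pprod P Q))) by [].
have sIT : @sumlike (iota_pp P) (iota_pp Q) (ph (iota_pp (ptri P Q))) (pr (iota_pp (ptri P Q))) by [].
have HiP := plane_iota HP; have HiQ := plane_iota HQ.
have cR (X : pp) : ppleq X R -> #|X| = #|P| + #|Q| -> #|R| = #|P| + #|Q|.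
  by case=> <- _.
have cI (I : {set R}) : ppleq P (sub (~: I)) -> #|~: I| = #|P|.
  by case=> -> _; rewrite card_subpp.
have cIi (I : {set R}) : ppleq (iota_pp (sub (~: I))) P -> #|~: I| = #|P|.
  by case=> <- _; rewrite card_subpp.
split; [|split; [|split]].
- split; [split|].
  + move=> h; have [hb h1 h2 _] := fwd HP HQ HR sTQ h.
    by exists [set z | #|P| <= rank z].
  + case=> I [hb h1 h2]; apply: (bwd HR sTQ (biideal_cut HR hb) h1 h2).
    move=> a b x y hx hy; split => // hyx.
    by move: (biideal_cross hb hx hy); rewrite hyx.
  + move=> h I [hb h1 h2]; apply: (uniq_theta HR HQ sPQ _ (biideal_cut HR hb)).
      apply: (cR _ h); exact: card_sum.
    exact: cI.
- split; [split|].
  + move=> h; have [hb h1 h2 hx] := fwd HP HQ HR sPQ h.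
    exists [set z | #|P| <= rank z]; split => //.
    apply: split_of => // [|x y hx' hy']; first exact: biideal_cut.
    have [a [b [c1 c2]]] := hx x y hx' hy'.
    by split; apply/negP; [move/c1|move/c2].
  + case=> I [hs h1 h2]; apply: (bwd HR sPQ (split_cut hs) h1 h2).
    move=> a b x y hx hy; have [n1 n2] := split_cross hs hx hy.
    by split => h; [move: n1|move: n2]; rewrite h.
  + move=> h I [hs h1 h2]; apply: (uniq_theta HR HQ sTQ _ (split_cut hs)).
      apply: (cR _ h); exact: card_sum.
    exact: cI.
- split; [split|].
  + move=> h; have [hb h1 h2 _] := fwd HiP HiQ HR sIP h.
    exists [set z | #|P| <= rank z]; split => //.
      exact: swap_pp (plane_sub _ HR) h1.
    exact: swap_pp (plane_sub _ HR) h2.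
  + case=> I [hb h1 h2]; apply: (bwd HR sIP (biideal_cut HR hb)).
    * exact: swap_pp (plane_sub _ HR) HP h1.
    * exact: swap_pp (plane_sub _ HR) HQ h2.
    move=> a b x y hx hy; split => // hyx.
    by move: (biideal_cross hb hx hy); rewrite hyx.
  + move=> h I [hb h1 h2]; apply: (uniq_theta HR HQ sPQ _ (biideal_cut HR hb)).
      apply: (cR _ h); exact: card_sum.
    exact: cIi.
- split; [split|].
  + move=> h; have [hb h1 h2 hx] := fwd HiP HiQ HR sIT h.
    exists [set z | #|P| <= rank z]; split => //.
    * apply: split_of => // [|x y hx' hy']; first exact: biideal_cut.
      have [a [b [c1 c2]]] := hx x y hx' hy'.
      by split; apply/negP; [move/c1|move/c2].
    * exact: swap_pp (plane_sub _ HR) h1.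
    * exact: swap_pp (plane_sub _ HR) h2.
  + case=> I [hs h1 h2]; apply: (bwd HR sIT (split_cut hs)).
    * exact: swap_pp (plane_sub _ HR) HP h1.
    * exact: swap_pp (plane_sub _ HR) HQ h2.
    move=> a b x y hx hy; have [n1 n2] := split_cross hs hx hy.
    by split => h; [move: n1|move: n2]; rewrite h.
  + move=> h I [hs h1 h2]; apply: (uniq_theta HR HQ sTQ _ (split_cut hs)).
      apply: (cR _ h); exact: card_sum.
    exact: cIi.
Qed.
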